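(* Consider the linear program $$z^*=\min\Big\{c^\top x+\sum_{v\in V_+}\theta_v:\ \theta_v\ge\sum_{\xi}p_\xi w_vy^\xi_v\ \forall v;\ y^\xi(S)\ge k_\xi(S)+x(E(S))-|S|\ \forall\emptyset\ne S\subseteq V_+,\xi\in[N];\ x\in\mathcal{X};\ y\in[\mathbf 0,b]^N\Big\}.$$ Suppose it is solved to optimality, and let $\alpha^*\ge0$ and $\beta^*\le0$ be optimal dual values associated with the constraints $y^\xi(S)\ge k_\xi(S)+x(E(S))-|S|$ and the upper bound constraints $y^\xi_v\le b_v$, respectively. Then $$z^*=\min\Big\{c^\top x+\mathbf 1^\top\theta:\ x\in\mathcal{X},\ \theta\in\operatorname{proj}_\theta(\Gamma(x,\alpha^*,\beta^* ))\Big\}.$$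
   Context: $G=(V,E)$ complete undirected graph, $V=\{0\}\cup V_+$ ($V_+$ customers), edge costs $c\in\mathbb{Q}^E_{\ge0}$; capacity $C>0$; scenarios $\xi\in[N]$ with demands $d^\xi\in\mathbb{Q}^{V_+}_{\ge0}$ ($d^\xi(v)\le C$) and probabilities $p_\xi\ge0$, $\sum_\xi p_\xi=1$. $f(S)=\sum_{i\in S}f(i)$; $k_\xi(S)=\lceil d^\xi(S)/C\rceil$; $\bar d=\sum_\xi p_\xi d^\xi$. $E(S)$: edges with both ends in $S$; $\delta(S)$: edges with exactly one end in $S$. $\mathcal{X}$ is one of $\mathcal{X}_{\mathrm{sub}}=\{x\in[0,2]^E: x(\delta(v))=2\ \forall v\in V_+,\ x(E(S))\le|S|-1\ \forall\emptyset\ne S\subseteq V_+\}$ or $\mathcal{X}_{\mathrm{cvrp}}=\mathcal{X}_{\mathrm{sub}}\cap\{x:x(\delta(0))=2k,\ x(E(S))\le|S|-\lceil\bar d(S)/C\rceil\}$. Fixed $w\in\mathbb{Q}^{V_+}_{\ge0}$, $b\in\mathbb{Z}^{V_+}_{\ge0}$; $y\in\mathbb{R}^{[N]\times V_+}$ has entries $y^\xi_v$; $[\mathbf 0,b]^N=\{y:0\le y^\xi_v\le b_v\}$. For multipliers $\alpha=(\alpha^\xi_S)\ge0$, $\beta=(\beta^\xi_v)\le0$: $\nu(\alpha,\beta)=\sum_\xi\sum_S\alpha^\xi_S(k_\xi(S)-|S|)+\sum_\xi\sum_v\beta^\xi_vb_v$, and for $x\in\mathcal{X}$, $\Gamma(x,\alpha,\beta)$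 is the set of $(\theta,y)\in\mathbb{R}^{V_+}_{\ge0}\times[\mathbf 0,b]^N$ with $\sum_\xi\sum_v(\beta^\xi_v+\sum_{S\ni v}\alpha^\xi_S)y^\xi_v\ge\sum_\xi\sum_S\alpha^\xi_Sx(E(S))+\nu(\alpha,\beta)$ and $\theta_v\ge\sum_\xi p_\xi w_vy^\xi_v$ for all $v$; $\operatorname{proj}_\theta$ is projection onto $\theta$. *)

(* Defs.v *)
From HB Require Import structures.
From mathcomp Require Import all_boot all_order all_algebra.
From mathcomp Require Import reals.
Set Implicit Arguments. Unset Strict Implicit. Unset Printing Implicit Defensive.
Import Order.TTheory GRing.Theory Num.Theory.
Local Open Scope ring_scope.

(* All variables are free; bounds are written as explicit rows.        *)

Inductive sense := Ge | Le | Eq.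

Record linsys (R : numDomainType) (J : finType) := LinSys {
  lrow   : finType;
  lcoef  : lrow -> J -> R;
  lsense : lrow -> sense;
  lrhs   : lrow -> R }.

Section LP.
Variables (R : numDomainType) (J : finType).

Definition sat (s : sense) (a b : R) : Prop :=
  match s with Ge => b <= a | Le => a <= b | Eq => a = b end.

Definition lhs (L : linsys R J) (i : lrow L) (u : J -> R) : R :=
  \sum_j lcoef i j * u j.

Definition lp_feasible (L : linsys R J) (u : J -> R) : Prop :=
  forall i : lrow L, sat (lsense i) (lhs i u) (lrhs i).

Definition lp_obj (c : J -> R) (u : J -> R) : R := \sum_j c j * u j.

Definition lp_optval (L : linsys R J) (c : J -> R) (z : R) : Prop :=
  (exists u, lp_feasible L u /\ lp_obj c u = z) /\
  (forall u, lp_feasible L u -> z <= lp_obj c u).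

Definition sign_ok (s : sense) (l : R) : Prop :=
  match s with Ge => 0 <= l | Le => l <= 0 | Eq => True end.

Definition dual_feasible (L : linsys R J) (c : J -> R) (lam : lrow L -> R) : Prop :=
  (forall j, \sum_(i : lrow L) lam i * lcoef i j = c j) /\
  (forall i : lrow L, sign_ok (lsense i) (lam i)).

Definition dual_obj (L : linsys R J) (lam : lrow L -> R) : R :=
  \sum_(i : lrow L) lam i * lrhs i.

Definition dual_optimal (L : linsys R J) (c : J -> R) (lam : lrow L -> R) : Prop :=
  dual_feasible c lam /\
  (forall lam' : lrow L -> R, dual_feasible c lam' -> dual_obj lam' <= dual_obj lam).
End LP.
Arguments dual_feasible {R J} L c lam.
Arguments dual_obj {R J} L lam.
Arguments dual_optimal {R J} L c lam.
Arguments lp_feasible {R J} L u.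
Arguments lp_optval {R J} L c z.


(* The graph: V = 'I_n.+1, depot 0 = ord0, customers V_+ = 'I_n,       *)
(* customer i is the vertex lift ord0 i (value i+1).                   *)
(* Edges of the complete graph: pairs (u,v) with u < v.                *)

Definition Edge (n : nat) := {e : 'I_n.+1 * 'I_n.+1 | (nat_of_ord e.1 < nat_of_ord e.2)%N}.

Definition nes (n : nat) := {S : {set 'I_n} | S != set0}.

Definition cust (n : nat) (i : 'I_n) : 'I_n.+1 := lift ord0 i.

Definition inE_S (n : nat) (S : {set 'I_n}) (e : Edge n) : bool :=
  ((val e).1 \in (@cust n) @: S) && ((val e).2 \in (@cust n) @: S).

Definition inDelta (n : nat) (u : 'I_n.+1) (e : Edge n) : bool :=
  ((val e).1 == u) || ((val e).2 == u).

Section Model.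
Variable R : realType.
Variables (n N : nat).

Definition xE (S : {set 'I_n}) (x : Edge n -> R) : R :=
  \sum_(e | inE_S S e) x e.

Definition xDelta (u : 'I_n.+1) (x : Edge n -> R) : R :=
  \sum_(e | inDelta u e) x e.

Definition kxi (C : R) (d : 'I_N -> 'I_n -> R) (xi : 'I_N) (S : {set 'I_n}) : R :=
  (Num.ceil ((\sum_(v in S) d xi v) / C))%:~R.

Definition dbar (p : 'I_N -> R) (d : 'I_N -> 'I_n -> R) (v : 'I_n) : R :=
  \sum_xi p xi * d xi v.

(* X_sub:  x in [0,2]^E, x(delta(v)) = 2 (v in V_+),
           x(E(S)) <= |S| - 1  (nonempty S subset of V_+) *)
Definition Xsub_row := (Edge n + Edge n + 'I_n + nes n)%type.

Definition Xsub_coef (r : Xsub_row) (e : Edge n) : R :=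
  match r with
  | inl (inl (inl f)) => (e == f)%:R
  | inl (inl (inr f)) => (e == f)%:R
  | inl (inr v) => (inDelta (cust v) e)%:R
  | inr Sx => (inE_S (val Sx) e)%:R
  end.

Definition Xsub_sense (r : Xsub_row) : sense :=
  match r with
  | inl (inl (inl _)) => Ge
  | inl (inl (inr _)) => Le
  | inl (inr _) => Eq
  | inr _ => Le
  end.

Definition Xsub_rhs (r : Xsub_row) : R :=
  match r with
  | inl (inl (inl _)) => 0
  | inl (inl (inr _)) => 2
  | inl (inr _) => 2
  | inr Sx => (#|val Sx|%:R - 1)
  end.

Definition Xsub : linsys R (Edge n) := LinSys Xsub_coef Xsub_sense Xsub_rhs.

(* X_cvrp = X_sub cap { x(delta(0)) = 2k, x(E(S)) <= |S| - ceil(dbar(S)/C) } *)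
Definition Xcvrp_row := (Xsub_row + unit + nes n)%type.

Section Cvrp.
Variables (k : nat) (C : R) (p : 'I_N -> R) (d : 'I_N -> 'I_n -> R).

Definition Xcvrp_coef (r : Xcvrp_row) (e : Edge n) : R :=
  match r with
  | inl (inl r') => Xsub_coef r' e
  | inl (inr _) => (inDelta ord0 e)%:R
  | inr Sx => (inE_S (val Sx) e)%:R
  end.

Definition Xcvrp_sense (r : Xcvrp_row) : sense :=
  match r with
  | inl (inl r') => Xsub_sense r'
  | inl (inr _) => Eq
  | inr _ => Le
  end.

Definition Xcvrp_rhs (r : Xcvrp_row) : R :=
  match r with
  | inl (inl r') => Xsub_rhs r'
  | inl (inr _) => 2 * k%:R
  | inr Sx => #|val Sx|%:R -
      (Num.ceil ((\sum_(v in val Sx) dbar p d v) / C))%:~R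
  end.

Definition Xcvrp : linsys R (Edge n) := LinSys Xcvrp_coef Xcvrp_sense Xcvrp_rhs.
End Cvrp.

Definition Xsys (cvrp : bool) (k : nat) (C : R) (p : 'I_N -> R)
  (d : 'I_N -> 'I_n -> R) : linsys R (Edge n) :=
  if cvrp then Xcvrp k C p d else Xsub.

(* The full LP in variables (x, theta, y).                              *)

Definition Var := (Edge n + 'I_n + ('I_N * 'I_n))%type.

Section Full.
Variables (X : linsys R (Edge n)) (C : R) (c : Edge n -> R) (p : 'I_N -> R)
  (d : 'I_N -> 'I_n -> R) (w : 'I_n -> R) (b : 'I_n -> nat).

(* rows: X-rows | theta_v >= sum_xi p_xi w_v y^xi_v
        | y^xi(S) - x(E(S)) >= k_xi(S) - |S|   (alpha rows)
        | y^xi_v >= 0  | y^xi_v <= b_v  (beta rows) *)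
Definition Frow := (lrow X + 'I_n + ('I_N * nes n) + ('I_N * 'I_n) + ('I_N * 'I_n))%type.

Definition Fcoef (r : Frow) (j : Var) : R :=
  match r, j with
  | inl (inl (inl (inl r'))), inl (inl e) => lcoef r' e
  | inl (inl (inl (inl _))), _ => 0
  | inl (inl (inl (inr v))), inl (inr v') => (v' == v)%:R
  | inl (inl (inl (inr v))), inr (xi, v') => - (p xi * w v) * (v' == v)%:R
  | inl (inl (inl (inr _))), _ => 0
  | inl (inl (inr (xi, Sx))), inl (inl e) => - (inE_S (val Sx) e)%:R
  | inl (inl (inr (xi, Sx))), inr (xi', v) => ((xi' == xi) && (v \in val Sx))%:R
  | inl (inl (inr _)), _ => 0
  | inl (inr (xi, v)), inr (xi', v') => ((xi' == xi) && (v' == v))%:R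
  | inl (inr _), _ => 0
  | inr (xi, v), inr (xi', v') => ((xi' == xi) && (v' == v))%:R
  | inr _, _ => 0
  end.

Definition Fsense (r : Frow) : sense :=
  match r with
  | inl (inl (inl (inl r'))) => lsense r'
  | inl (inl (inl (inr _))) => Ge
  | inl (inl (inr _)) => Ge
  | inl (inr _) => Ge
  | inr _ => Le
  end.

Definition Frhs (r : Frow) : R :=
  match r with
  | inl (inl (inl (inl r'))) => lrhs r'
  | inl (inl (inl (inr _))) => 0
  | inl (inl (inr (xi, Sx))) => kxi C d xi (val Sx) - #|val Sx|%:R
  | inl (inr _) => 0
  | inr (xi, v) => (b v)%:R
  end.

Definition FullLP : linsys R Var := LinSys Fcoef Fsense Frhs.

Definition Fobj (j : Var) : R :=
  match j with
  | inl (inl e) => c e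
  | inl (inr _) => 1
  | inr _ => 0
  end.

Definition row_alpha (xi : 'I_N) (S : nes n) : Frow :=
  inl (inl (inr (xi, S))).
Definition row_beta (xi : 'I_N) (v : 'I_n) : Frow := inr (xi, v).

Definition nu (alpha : 'I_N -> {set 'I_n} -> R) (beta : 'I_N -> 'I_n -> R) : R :=
  \sum_xi \sum_(S : {set 'I_n} | S != set0) alpha xi S * (kxi C d xi S - #|S|%:R)
  + \sum_xi \sum_v beta xi v * (b v)%:R.

Definition Gamma (x : Edge n -> R) (alpha : 'I_N -> {set 'I_n} -> R)
  (beta : 'I_N -> 'I_n -> R) (theta : 'I_n -> R) (y : 'I_N -> 'I_n -> R) : Prop :=
  (forall v, 0 <= theta v) /\
  (forall xi v, 0 <= y xi v <= (b v)%:R) /\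
  \sum_xi \sum_v (beta xi v +
      \sum_(S : {set 'I_n} | (S != set0) && (v \in S)) alpha xi S) * y xi v
    >= \sum_xi \sum_(S : {set 'I_n} | S != set0) alpha xi S * xE S x + nu alpha beta /\
  (forall v, theta v >= \sum_xi p xi * w v * y xi v).
End Full.
End Model.

(* Main.v *)
Require Import Defs.
From HB Require Import structures.
From mathcomp Require Import all_boot all_order all_algebra.
From mathcomp Require Import reals.
From mathcomp Require Import ring lra.
Set Implicit Arguments. Unset Strict Implicit. Unset Printing Implicit Defensive.
Import Order.TTheory GRing.Theory Num.Theory.
Local Open Scope ring_scope.

Section FM.
Variables (R : realFieldType) (J : finType).
Definition row := ((J -> R) * R)%type.
Definition dotp (a u : J -> R) := \sum_j a j * u j.

Inductive cone (I : finType) (f : I -> row) : row -> Prop :=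
 | cone0 : cone f (fun _ => 0, 0)
 | coneI i : cone f (f i)
 | coneD r s : cone f r -> cone f s -> cone f (fun j => r.1 j + s.1 j, r.2 + s.2)
 | coneZ c r : 0 <= c -> cone f r -> cone f (fun j => c * r.1 j, c * r.2).

Lemma cone_sub (I I' : finType) (f : I -> row) (g : I' -> row) r :
  (forall i, cone f (g i)) -> cone g r -> cone f r.
Proof.
move=> H; elim => [|i|r1 s1 _ H1 _ H2|c r1 c0 _ H1].
- exact: cone0.
- exact: H.
- exact: coneD.
- exact: coneZ.
Qed.

Lemma sep_lemma (I : finType) (P Q : pred I) (l h : I -> R) :
  (forall i k, P i -> Q k -> l i <= h k) ->
  exists t, (forall i, P i -> l i <= t) /\ (forall k, Q k -> t <= h k).
Proof.
move=> H.
pose m := \big[Order.min/0]_(k | Q k) h k.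
exists (\big[Order.max/m]_(i | P i) l i); split.
- by move=> i Pi; apply: le_bigmax_cond.
- move=> k Qk; apply: bigmax_le.
  + exact: bigmin_le_cond.
  + by move=> i Pi; apply: H.
Qed.

Definition upd (u : J -> R) (j0 : J) (t : R) := fun j => if j == j0 then t else u j.

Lemma dotp_upd a u j0 t :
  dotp a (upd u j0 t) = a j0 * t + \sum_(j | j != j0) a j * u j.
Proof.
rewrite /dotp (bigD1 j0) //= /upd eqxx; congr (_ + _).
by apply: eq_bigr => j /negbTE ->.
Qed.

Lemma dotp_split a u j0 :
  dotp a u = a j0 * u j0 + \sum_(j | j != j0) a j * u j.
Proof. by rewrite /dotp (bigD1 j0). Qed.

Definition Feas (I : finType) (f : I -> row) :=
  exists u, forall i, (f i).2 <= dotp (f i).1 u.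
Definition Cert (I : finType) (f : I -> row) :=
  exists r, cone f r /\ (forall j, r.1 j = 0) /\ 0 < r.2.

Lemma fm_ind m : forall (D : {set J}), #|D| = m ->
  forall (I : finType) (f : I -> row),
  (forall i j, j \notin D -> (f i).1 j = 0) -> Feas f \/ Cert f.
Proof.
elim: m => [|m IH] D HD I f Hf.
- have D0 : D = set0 by apply/eqP; rewrite -cards_eq0 HD.
  case: (boolP [exists i, 0 < (f i).2]).
  + move/existsP=> [i Hi]; right; exists (f i); split; first exact: coneI.
    split=> // j; apply: Hf; by rewrite D0 inE.
  + move=> Hn; left; exists (fun _ => 0) => i.
    rewrite /dotp big1 ?mulr0 //; last by move=> j _; rewrite mulr0.
    rewrite leNgt; apply/negP => Hi; move/negP: Hn; apply; apply/existsP; by exists i.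
- have : (0 < #|D|)%N by rewrite HD.
  case/card_gt0P => j0 Hj0.
  pose D' := D :\ j0.
  have HD' : #|D'| = m by move: HD; rewrite (cardsD1 j0) Hj0 add1n => -[].
  pose a i := (f i).1 j0.
  pose g (q : (I + I * I)%type) : row :=
    match q with
    | inl i => if a i == 0 then f i else (fun _ => 0, 0)
    | inr (i, k) => if (0 < a i) && (a k < 0) then
        (fun j => (- a k) * (f i).1 j + a i * (f k).1 j,
                  (- a k) * (f i).2 + a i * (f k).2)
        else (fun _ => 0, 0)
    end.
  have Hg : forall q j, j \notin D' -> (g q).1 j = 0.
    move=> [i|[i k]] j; rewrite /D' !inE negb_and negbK => /orP [/eqP->|Hj] /=.
    + by case: ifP => //= /eqP.
    + by case: ifP => //= _; apply: Hf.
    + by case: ifP => //= _; rewrite /a; ring.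
    + by case: ifP => //= _; rewrite !Hf // !mulr0 addr0.
  have Hgc : forall q, cone f (g q).
    move=> [i|[i k]] /=.
    + case: ifP => _; [exact: coneI | exact: cone0].
    + case: ifP => [/andP [Hi Hk]|_]; last exact: cone0.
      apply: (coneD (coneZ _ (coneI f i)) (coneZ _ (coneI f k))).
      * by rewrite oppr_ge0 ltW.
      * by rewrite ltW.
  case: (IH D' HD' _ g Hg) => [[u Hu]|[r [Hr1 Hr2]]]; last first.
    by right; exists r; split => //; apply: cone_sub Hr1.
  left.
  pose s i := \sum_(j | j != j0) (f i).1 j * u j.
  pose l i := ((f i).2 - s i) / a i.
  have Hlh : forall i k, 0 < a i -> a k < 0 -> l i <= l k.
    move=> i k Hi Hk.
    have := Hu (inr (i, k)); rewrite /= Hi Hk /=.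
    rewrite (dotp_split _ _ j0) /= -/(a i) -/(a k).
    have -> : \sum_(j | j != j0) ((- a k) * (f i).1 j + a i * (f k).1 j) * u j
       = (- a k) * s i + a i * s k.
      rewrite /s !mulr_sumr -big_split /=; apply: eq_bigr => j _; ring.
    move=> H.
    rewrite /l ler_pdivrMr // mulrAC ler_ndivlMr //.
    nra.
  have [t [Ht1 Ht2]] := @sep_lemma I (fun i => 0 < a i) (fun k => a k < 0) l l Hlh.
  exists (upd u j0 t) => i.
  rewrite dotp_upd -/(s i) -/(a i).
  case: (ltrgtP (a i) 0) => Hai.
  + have := Ht2 _ Hai; rewrite /l ler_ndivlMr // => H.
    nra.
  + have := Ht1 _ Hai; rewrite /l ler_pdivrMr // => H.
    nra.
  + have := Hu (inl i); rewrite /= Hai eqxx (dotp_split _ _ j0) -/(a i) Hai.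
    by rewrite !mul0r !add0r.
Qed.

End FM.

Section SD.
Variables (R : realFieldType) (J : finType).

Lemma cone_lam (I : finType) (f : I -> row R J) r : cone f r ->
  exists lam : I -> R, (forall i, 0 <= lam i) /\
    (forall j, r.1 j = \sum_i lam i * (f i).1 j) /\ r.2 = \sum_i lam i * (f i).2.
Proof.
elim => [|i0|r1 s1 _ [l1 [H1 [H2 H3]]] _ [l2 [H4 [H5 H6]]]|c r1 c0 _ [l1 [H1 [H2 H3]]]].
- exists (fun _ => 0); split=> //; split=> [j|] /=; rewrite big1 // => i _; by rewrite mul0r.
- exists (fun i => (i == i0)%:R); split=> [i|]; first by rewrite ler0n.
  have E : forall (F : I -> R), F i0 = \sum_i (i == i0)%:R * F i.
    move=> F; rewrite (bigD1 i0) //= eqxx mul1r big1 ?addr0 // => i /negbTE ->.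
    by rewrite mul0r.
  by split=> [j|]; apply: E.
- exists (fun i => l1 i + l2 i); split=> [i|]; first by rewrite addr_ge0.
  split=> [j|] /=; rewrite ?H2 ?H5 ?H3 ?H6 -big_split /=;
    apply: eq_bigr => i _; ring.
- exists (fun i => c * l1 i); split=> [i|]; first by rewrite mulr_ge0.
  split=> [j|] /=; rewrite ?H2 ?H3 mulr_sumr; apply: eq_bigr => i _; ring.
Qed.

Lemma farkas (I : finType) (f : I -> row R J) :
  (forall u, ~ (forall i, (f i).2 <= dotp (f i).1 u)) ->
  exists lam : I -> R, (forall i, 0 <= lam i) /\
    (forall j, \sum_i lam i * (f i).1 j = 0) /\ 0 < \sum_i lam i * (f i).2.
Proof.
move=> Hn.
have Hv : forall i j, j \notin [set: J] -> (f i).1 j = 0 by move=> i j; rewrite inE.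
have [[u Hu]|[r [Hr [H1 H2]]]] := @fm_ind R J #|[set: J]| [set: J] erefl I f Hv.
- by case: (Hn u).
- have [lam [L1 [L2 L3]]] := cone_lam Hr.
  exists lam; split=> //; split=> [j|]; by rewrite -?L2 -?L3.
Qed.

Lemma sign_mul s (l a b : R) : sign_ok s l -> sat s a b -> l * b <= l * a.
Proof.
case: s => /= Hl Hs.
- by rewrite ler_wpM2l.
- by rewrite ler_wnM2l.
- by rewrite Hs.
Qed.

Lemma dotpZ k (a u : J -> R) : dotp (fun j => k * a j) u = k * dotp a u.
Proof. rewrite /dotp mulr_sumr; apply: eq_bigr => j _; ring. Qed.

Lemma sum_unit (F : unit -> R) : \sum_(i : unit) F i = F tt.
Proof. by rewrite (big_pred1 tt) // => -[]. Qed.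

Definition act (s : sense) (b : bool) : bool :=
  match s, b with Ge, true | Le, false | Eq, _ => true | _, _ => false end.
Definition sgb (b : bool) : R := if b then 1 else -1.

Lemma strong (L : linsys R J) (c : J -> R) z : lp_optval L c z ->
  forall eps, 0 < eps -> exists lam, dual_feasible L c lam /\ z - eps < dual_obj L lam.
Proof.
move=> [[us [Hus Hz]] Hopt] eps Heps.
pose I := ((lrow L * bool) + unit)%type.
pose f (q : I) : row R J := match q with
  | inl (i, b) => (fun j => (act (lsense i) b)%:R * sgb b * lcoef i j,
                   (act (lsense i) b)%:R * sgb b * lrhs i)
  | inr _ => (fun j => - c j, - (z - eps)) end.
have Hn : forall u, ~ (forall q, (f q).2 <= dotp (f q).1 u).
  move=> u Hu.
  have Hf : lp_feasible L u.
    move=> i; have H1 := Hu (inl (i, true)); have H2 := Hu (inl (i, false)).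
    rewrite /= !dotpZ in H1 H2; rewrite /lhs -/(dotp _ _).
    case: (lsense i) H1 H2 => /= H1 H2.
    + lra.
    + lra.
    + lra.
  have := Hopt u Hf; have := Hu (inr tt); rewrite /= /lp_obj.
  rewrite /dotp.
  have -> : \sum_j - c j * u j = - \sum_j c j * u j.
    by rewrite -sumrN; apply: eq_bigr => j _; ring.
  rewrite lerN2 => H1 H2; lra.
have [lam [L1 [L2 L3]]] := farkas Hn.
pose l0 := lam (inr tt).
pose D (i : lrow L) := \sum_b lam (inl (i, b)) * ((act (lsense i) b)%:R * sgb b).
have ES : forall (F : lrow L -> R),
   \sum_(q : lrow L * bool) lam (inl q) * ((act (lsense q.1) q.2)%:R * sgb q.2 * F q.1)
   = \sum_i D i * F i.
  move=> F.
  transitivity (\sum_i \sum_b lam (inl (i, b)) * ((act (lsense i) b)%:R * sgb b * F i)).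
    by rewrite pair_bigA; apply: eq_bigr => -[i b].
  apply: eq_bigr => i _; rewrite /D mulr_suml; apply: eq_bigr => b _; ring.
have HD1 : forall j, \sum_i D i * lcoef i j = l0 * c j.
  move=> j; have := L2 j; rewrite big_sumType /= sum_unit /=.
  rewrite (eq_bigr (fun q : lrow L * bool => lam (inl q) * ((act (lsense q.1) q.2)%:R * sgb q.2 * lcoef q.1 j))); last by move=> [i b].
  rewrite (ES (fun i => lcoef i j)) => H.
  rewrite -/l0 in H; lra.
have HD2 : l0 * (z - eps) < \sum_i D i * lrhs i.
  move: L3; rewrite big_sumType /= sum_unit /=.
  rewrite (eq_bigr (fun q : lrow L * bool => lam (inl q) * ((act (lsense q.1) q.2)%:R * sgb q.2 * lrhs q.1))); last by move=> [i b].
  rewrite (ES (fun i => lrhs i)) -/l0 => H; lra.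
have HDs : forall i, sign_ok (lsense i) (D i).
  move=> i; rewrite /D big_bool /=.
  have := L1 (inl (i, true)); have := L1 (inl (i, false)).
  case: (lsense i) => //= H1 H2; lra.
have HDu : \sum_i D i * lrhs i <= l0 * z.
  rewrite -Hz /lp_obj mulr_sumr.
  have -> : \sum_j l0 * (c j * us j) = \sum_i D i * lhs i us.
    rewrite [RHS](eq_bigr (fun i => \sum_j D i * (lcoef i j * us j))); last first.
      by move=> i _; rewrite /lhs mulr_sumr.
    rewrite exchange_big /=; apply: eq_bigr => j _.
    rewrite mulrA -HD1 mulr_suml; apply: eq_bigr => i _; ring.
  by apply: ler_sum => i _; apply: sign_mul.
have Hl0 : 0 < l0.
  have H0 : 0 <= l0 := L1 _.
  rewrite lt_def H0 andbT; apply/eqP => E; rewrite E in HD2 HDu; lra.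
exists (fun i => D i / l0); split; first split.
- move=> j; rewrite -(mulKf (lt0r_neq0 Hl0) (c j)) -HD1 mulr_sumr.
  apply: eq_bigr => i _; field; exact: lt0r_neq0.
- move=> i; have := HDs i; case: (lsense i) => //= H.
  + by rewrite divr_ge0 // ltW.
  + by rewrite pmulr_lle0 // invr_gt0.
- rewrite /dual_obj.
  have -> : \sum_i D i / l0 * lrhs i = (\sum_i D i * lrhs i) / l0.
    rewrite mulr_suml; apply: eq_bigr => i _; field; exact: lt0r_neq0.
  by rewrite ltr_pdivlMr // mulrC.
Qed.
End SD.

Section Helpers.
Variable R : realFieldType.

Lemma sum_pair (I1 I2 : finType) (F : I1 * I2 -> R) :
  \sum_q F q = \sum_i \sum_j F (i, j).
Proof. by rewrite pair_bigA; apply: eq_bigr => -[]. Qed.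

Lemma sum_ind (I : finType) (P : pred I) (G : I -> R) :
  \sum_i (P i)%:R * G i = \sum_(i | P i) G i.
Proof. by rewrite [RHS]big_mkcond; apply: eq_bigr => i _; case: (P i); rewrite ?mul1r ?mul0r. Qed.

Lemma sum_delta_and (I1 I2 : finType) (a : I1) (P : pred I2) (G : I1 -> I2 -> R) :
  \sum_i \sum_j ((i == a) && P j)%:R * G i j = \sum_(j | P j) G a j.
Proof.
rewrite (bigD1 a) //= [X in _ + X]big1 ?addr0.
  by rewrite -(sum_ind P (G a)); apply: eq_bigr => j _; rewrite eqxx.
move=> i /negbTE Hi; rewrite big1 // => j _; by rewrite Hi mul0r.
Qed.

Lemma sum_nes n (F : {set 'I_n} -> R) :
  \sum_(S : {set 'I_n} | S != set0) F S = \sum_(S : nes n) F (val S).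
Proof.
rewrite (reindex_omap (val : nes n -> {set 'I_n}) insub); last first.
  by move=> S HS; rewrite insubT.
by apply: eq_bigl => S /=; rewrite valK eqxx (valP S).
Qed.

Lemma sum_delta (I : finType) (a : I) (G : I -> R) : \sum_i (i == a)%:R * G i = G a.
Proof.
rewrite (bigD1 a) //= eqxx mul1r big1 ?addr0 // => i /negbTE ->; by rewrite mul0r.
Qed.

Lemma sum_mul0 (I : finType) (F : I -> R) : \sum_i 0 * F i = 0.
Proof. by rewrite big1 // => i _; rewrite mul0r. Qed.

Lemma sum_mul00 (I1 I2 : finType) (F : I1 -> I2 -> R) : \sum_i \sum_j 0 * F i j = 0.
Proof. by rewrite big1 // => i _; rewrite sum_mul0. Qed.


Lemma exch_in n (P : pred {set 'I_n}) (F : {set 'I_n} -> 'I_n -> R) :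
  \sum_v \sum_(S | P S && (v \in S)) F S v = \sum_(S | P S) \sum_(v in S) F S v.
Proof.
rewrite (eq_bigr (fun v => \sum_S (if P S && (v \in S) then F S v else 0))); last first.
  by move=> v _; rewrite big_mkcond.
rewrite exchange_big [RHS]big_mkcond; apply: eq_bigr => S _; case: (P S) => /=.
  by rewrite [RHS]big_mkcond.
by rewrite big1.
Qed.

Lemma agg n N (alpha : 'I_N -> {set 'I_n} -> R) (beta : 'I_N -> 'I_n -> R) (y : 'I_N -> 'I_n -> R) :
  \sum_xi \sum_v (beta xi v +
      \sum_(S : {set 'I_n} | (S != set0) && (v \in S)) alpha xi S) * y xi v
  = \sum_xi \sum_v beta xi v * y xi v +
    \sum_xi \sum_(S : nes n) alpha xi (val S) * \sum_(v in val S) y xi v.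
Proof.
rewrite -big_split; apply: eq_bigr => xi _ /=.
rewrite -(sum_nes (fun S => alpha xi S * \sum_(v in S) y xi v)).
under eq_bigr => v _ do rewrite mulrDl.
rewrite big_split /=; congr (_ + _).
under eq_bigr => v _ do rewrite mulr_suml.
rewrite (exch_in (fun S => S != set0) (fun S v => alpha xi S * y xi v)).
by apply: eq_bigr => S _; rewrite mulr_sumr.
Qed.

Lemma sum_mulr0 (I : finType) (F : I -> R) : \sum_i F i * 0 = 0.
Proof. by rewrite big1 // => i _; rewrite mulr0. Qed.

Lemma sum_mulr00 (I1 I2 : finType) (F : I1 -> I2 -> R) : \sum_i \sum_j F i j * 0 = 0.
Proof. by rewrite big1 // => i _; rewrite sum_mulr0. Qed.

Lemma le_eps (a b : R) : (forall eps, 0 < eps -> a - eps < b) -> a <= b.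
Proof.
move=> H; rewrite leNgt; apply/negP => Hab.
have := H (a - b); rewrite subr_gt0 => /(_ Hab); lra.
Qed.
End Helpers.

Section Main.
Variables (R : realType) (n N : nat) (X : linsys R (Edge n)) (C : R) (c : Edge n -> R)
  (p : 'I_N -> R) (d : 'I_N -> 'I_n -> R) (w : 'I_n -> R) (b : 'I_n -> nat).
Let LP := FullLP X C p d w b.

Definition xof (u : Var n N -> R) e := u (inl (inl e)).
Definition thof (u : Var n N -> R) v := u (inl (inr v)).
Definition yof (u : Var n N -> R) xi v := u (inr (xi, v)).

Lemma sumVar (F : Var n N -> R) : \sum_j F j =
  \sum_e F (inl (inl e)) + \sum_v F (inl (inr v)) + \sum_xi \sum_v F (inr (xi, v)).
Proof. by rewrite !big_sumType sum_pair. Qed.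

Lemma sumFrow (G : @Frow R n N X -> R) : \sum_r G r =
  \sum_(r : lrow X) G (inl (inl (inl (inl r)))) + \sum_v G (inl (inl (inl (inr v))))
  + \sum_xi \sum_(S : nes n) G (inl (inl (inr (xi, S))))
  + \sum_xi \sum_v G (inl (inr (xi, v))) + \sum_xi \sum_v G (inr (xi, v)).
Proof. by rewrite !big_sumType !sum_pair. Qed.

Lemma lhs_X r u : lhs (L := LP) (inl (inl (inl (inl r)))) u = \sum_e lcoef r e * xof u e.
Proof. by rewrite /lhs sumVar /= sum_mul0 sum_mul00 !addr0. Qed.

Lemma lhs_th v u : lhs (L := LP) (inl (inl (inl (inr v)))) u =
  thof u v - \sum_xi p xi * w v * yof u xi v.
Proof.
rewrite /lhs sumVar /= sum_mul0 add0r sum_delta; congr (_ + _).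
rewrite -sumrN; apply: eq_bigr => xi _.
rewrite (eq_bigr (fun v0 => (v0 == v)%:R * (-(p xi * w v) * u (inr (xi,v0))))).
  by rewrite sum_delta /yof; ring.
by move=> v0 _; ring.
Qed.

Lemma lhs_al xi S u : lhs (L := LP) (inl (inl (inr (xi, S)))) u =
  \sum_(v in val S) yof u xi v - xE (val S) (xof u).
Proof.
rewrite /lhs sumVar /= sum_mul0 addr0 addrC; congr (_ + _).
  by rewrite (sum_delta_and xi (fun v => v \in val S) (fun i j => yof u i j)).
rewrite /xE -sumrN [RHS]big_mkcond.
apply: eq_bigr => e _; rewrite /xof; case: (inE_S _ e) => /=.
  by rewrite mulr1n mulN1r.
by rewrite mulr0n oppr0 mul0r.
Qed.

Lemma lhs_nn xi v u : lhs (L := LP) (inl (inr (xi, v))) u = yof u xi v.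
Proof.
rewrite /lhs sumVar /= sum_mul0 sum_mul0 !add0r.
rewrite (sum_delta_and xi (fun j => j == v) (fun i j => yof u i j)).
by rewrite big_pred1_eq.
Qed.

Lemma lhs_be xi v u : lhs (L := LP) (inr (xi, v)) u = yof u xi v.
Proof.
rewrite /lhs sumVar /= sum_mul0 sum_mul0 !add0r.
rewrite (sum_delta_and xi (fun j => j == v) (fun i j => yof u i j)).
by rewrite big_pred1_eq.
Qed.

End Main.

Theorem corollary4 (R : realType) (n N : nat)
    (c : Edge n -> rat) (C : rat) (d : 'I_N -> 'I_n -> rat) (p : 'I_N -> rat)
    (w : 'I_n -> rat) (b : 'I_n -> nat) (cvrp : bool) (k : nat)
    (hc : forall e, 0 <= c e) (hC : 0 < C)
    (hd : forall xi v, 0 <= d xi v <= C)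
    (hp : forall xi, 0 <= p xi) (hp1 : \sum_xi p xi = 1)
    (hw : forall v, 0 <= w v)
    (zstar : R) (alpha : 'I_N -> {set 'I_n} -> R) (beta : 'I_N -> 'I_n -> R) :
  let cR := fun e => (ratr (c e) : R) in
  let CR := (ratr C : R) in
  let dR := fun xi v => (ratr (d xi v) : R) in
  let pR := fun xi => (ratr (p xi) : R) in
  let wR := fun v => (ratr (w v) : R) in
  let X := Xsys cvrp k CR pR dR in
  let LP := FullLP X CR pR dR wR b in
  let obj := Fobj cR in
  lp_optval LP obj zstar ->
  (exists lam, dual_optimal LP obj lam /\
     (forall xi (S : nes n), alpha xi (val S) = lam (row_alpha X xi S)) /\
     (forall xi v, beta xi v = lam (row_beta X xi v))) ->
  (exists (x : Edge n -> R) (theta : 'I_n -> R),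
      lp_feasible X x /\ (exists y, Gamma CR pR dR wR b x alpha beta theta y) /\
      \sum_e cR e * x e + \sum_v theta v = zstar) /\
  (forall (x : Edge n -> R) (theta : 'I_n -> R),
      lp_feasible X x -> (exists y, Gamma CR pR dR wR b x alpha beta theta y) ->
      zstar <= \sum_e cR e * x e + \sum_v theta v).
Proof.
move=> cR CR dR pR wR X LP obj Hopt [lam [[Hdf Hdmax] [Ha Hb]]].
have Hz : zstar <= dual_obj LP lam.
  apply: le_eps => eps Heps; have [lam' [H1 H2]] := strong Hopt Heps.
  exact: lt_le_trans H2 (Hdmax _ H1).
have Hsign := Hdf.2.
have Hal : forall xi (S : nes n), 0 <= alpha xi (val S).
  by move=> xi S; rewrite Ha; exact: (Hsign (inl (inl (inr (xi, S))))).
have Hbe : forall xi v, beta xi v <= 0.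
  by move=> xi v; rewrite Hb; exact: (Hsign (inr (xi, v))).
have Hth : forall v, 0 <= lam (inl (inl (inl (inr v)))).
  by move=> v; exact: (Hsign (inl (inl (inl (inr v))))).
have Hnn : forall xi v, 0 <= lam (inl (inr (xi, v))).
  by move=> xi v; exact: (Hsign (inl (inr (xi, v)))).
have HpR : forall xi, 0 <= pR xi by move=> xi; rewrite /pR ler0q.
have HwR : forall v, 0 <= wR v by move=> v; rewrite /wR ler0q.
have Hobj : forall u, lp_obj obj u = \sum_e cR e * xof u e + \sum_v thof u v.
  move=> u; rewrite /lp_obj sumVar /= sum_mul00 addr0; congr (_ + _).
  by apply: eq_bigr => v _; rewrite mul1r.
have Hnu : nu CR dR b alpha beta =
    \sum_xi \sum_(S : nes n) alpha xi (val S) * (kxi CR dR xi (val S) - #|val S|%:R)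
    + \sum_xi \sum_v beta xi v * (b v)%:R.
  rewrite /nu; congr (_ + _); apply: eq_bigr => xi _.
  exact: (sum_nes (fun S => alpha xi S * (kxi CR dR xi S - #|S|%:R))).
have HxE : forall x, \sum_xi \sum_(S : {set 'I_n} | S != set0) alpha xi S * xE S x =
    \sum_xi \sum_(S : nes n) alpha xi (val S) * xE (val S) x.
  move=> x; apply: eq_bigr => xi _.
  exact: (sum_nes (fun S => alpha xi S * xE S x)).
split.
  have [[us [Hus Hzs]] _] := Hopt.
  have Hy0 : forall xi v, 0 <= yof us xi v.
    by move=> xi v; have := Hus (inl (inr (xi, v))); rewrite lhs_nn.
  have Hyb : forall xi v, yof us xi v <= (b v)%:R.
    by move=> xi v; have := Hus (inr (xi, v)); rewrite lhs_be.
  have Ht : forall v, \sum_xi pR xi * wR v * yof us xi v <= thof us v.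
    move=> v; have := Hus (inl (inl (inl (inr v)))); rewrite lhs_th /=.
    by rewrite subr_ge0.
  have Hsa : forall xi (S : nes n), kxi CR dR xi (val S) - #|val S|%:R <=
      \sum_(v in val S) yof us xi v - xE (val S) (xof us).
    by move=> xi S; have := Hus (inl (inl (inr (xi, S)))); rewrite lhs_al.
  exists (xof us), (thof us); split; last split.
  - by move=> r; have := Hus (inl (inl (inl (inl r)))); rewrite lhs_X.
  - exists (yof us); split; last split; last split.
    + move=> v; apply: le_trans (Ht v); apply: sumr_ge0 => xi _.
      by apply: mulr_ge0; [exact: mulr_ge0 | exact: Hy0].
    + by move=> xi v; rewrite Hy0 Hyb.
    + rewrite agg Hnu HxE.
      have A1 : \sum_xi \sum_(S : nes n) alpha xi (val S) * xE (val S) (xof us) +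
          \sum_xi \sum_(S : nes n) alpha xi (val S) * (kxi CR dR xi (val S) - #|val S|%:R)
          <= \sum_xi \sum_(S : nes n) alpha xi (val S) * \sum_(v in val S) yof us xi v.
        rewrite -big_split; apply: ler_sum => xi _; rewrite -big_split.
        apply: ler_sum => S _ /=; have := Hal xi S; have := Hsa xi S.
        set Y := \sum_(v in _) _; nra.
      have A2 : \sum_xi \sum_v beta xi v * (b v)%:R <= \sum_xi \sum_v beta xi v * yof us xi v.
        apply: ler_sum => xi _; apply: ler_sum => v _; exact: ler_wnM2l.
      lra.
    + exact: Ht.
  - by rewrite -Hzs Hobj.
move=> x theta Hx [y [G1 [G2 [G3 G4]]]].
pose u : Var n N -> R := fun j => match j with
  | inl (inl e) => x e | inl (inr v) => theta v | inr (xi, v) => y xi v end.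
have -> : \sum_e cR e * x e + \sum_v theta v = lp_obj obj u by rewrite Hobj.
apply: (le_trans Hz).
have E : lp_obj obj u = \sum_r lam r * lhs r u.
  rewrite /lp_obj /lhs.
  under eq_bigr => j _ do rewrite -(Hdf.1 j) mulr_suml.
  rewrite exchange_big; apply: eq_bigr => r _; rewrite mulr_sumr.
  by apply: eq_bigr => j _; rewrite mulrA.
rewrite E sumFrow /dual_obj sumFrow /= sum_mulr0 sum_mulr00 !addr0.
have T1 : \sum_(r : lrow X) lam (inl (inl (inl (inl r)))) * lrhs r <=
    \sum_(r : lrow X) lam (inl (inl (inl (inl r)))) * lhs (L := LP) (inl (inl (inl (inl r)))) u.
  apply: ler_sum => r _; rewrite lhs_X; apply: sign_mul; last exact: Hx.
  exact: (Hsign (inl (inl (inl (inl r))))).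
have T2 : 0 <= \sum_v lam (inl (inl (inl (inr v)))) * lhs (L := LP) (inl (inl (inl (inr v)))) u.
  apply: sumr_ge0 => v _; rewrite lhs_th; apply: mulr_ge0 => //.
  by rewrite subr_ge0; exact: G4.
have T4 : 0 <= \sum_xi \sum_v lam (inl (inr (xi, v))) * lhs (L := LP) (inl (inr (xi, v))) u.
  apply: sumr_ge0 => xi _; apply: sumr_ge0 => v _; rewrite lhs_nn.
  by apply: mulr_ge0 => //; have /andP[] := G2 xi v.
have T3 : \sum_xi \sum_(S : nes n) lam (inl (inl (inr (xi, S)))) * lhs (L := LP) (inl (inl (inr (xi, S)))) u
    = \sum_xi \sum_(S : nes n) alpha xi (val S) * \sum_(v in val S) y xi v
      - \sum_xi \sum_(S : nes n) alpha xi (val S) * xE (val S) x.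
  rewrite -sumrB; apply: eq_bigr => xi _; rewrite -sumrB; apply: eq_bigr => S _.
  by rewrite lhs_al Ha mulrBr.
have T5 : \sum_xi \sum_v lam (inr (xi, v)) * lhs (L := LP) (inr (xi, v)) u =
    \sum_xi \sum_v beta xi v * y xi v.
  by apply: eq_bigr => xi _; apply: eq_bigr => v _; rewrite lhs_be Hb.
have T6 : \sum_xi \sum_(S : nes n) lam (inl (inl (inr (xi, S)))) *
      (kxi CR dR xi (val S) - #|val S|%:R) =
    \sum_xi \sum_(S : nes n) alpha xi (val S) * (kxi CR dR xi (val S) - #|val S|%:R).
  by apply: eq_bigr => xi _; apply: eq_bigr => S _; rewrite Ha.
have T7 : \sum_xi \sum_v lam (inr (xi, v)) * (b v)%:R = \sum_xi \sum_v beta xi v * (b v)%:R.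
  by apply: eq_bigr => xi _; apply: eq_bigr => v _; rewrite Hb.
move: G3; rewrite agg Hnu HxE => G3.
move: T1 T2 T3 T4 T5 T6 T7 G3 => /= T1 T2 T3 T4 T5 T6 T7 G3.
lra.
Qed.
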